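(* Let $t$ be any variable-free $\mathcal{L}$-term and let $s$ be the sequence that is the interpretation of $t$ in the standard structure $\mathfrak{S}$. Then $\mathsf{WSeq}_2 \vdash t = \overline{s}$, where $\mathsf{WSeq}_2$ denotes the axiom scheme $\overline{(s_1,\ldots,s_n)}\circ\overline{(t_1,\ldots,t_m)} = \overline{(s_1,\ldots,s_n,t_1,\ldots,t_m)}$ for all sequences $(s_1,\ldots,s_n)$ and $(t_1,\ldots,t_m)$ (with $n,m\ge 0$).
   Context: $\mathcal{L}$ is the first-order language $\{e, \vdash, \circ\}$ with $e$ a constant symbol and $\vdash$ (written infix, $x\vdash y$), $\circ$ binary function symbols. Sequences are defined inductively: the empty sequence $()$ is a sequence, and for $n>0$, if $s_1,\ldots,s_n$ are sequences then $(s_1,\ldots,s_n)$ is a sequence. The standard structure $\mathfrak{S}$ has the set of all sequences as universe, $e^{\mathfrak{S}}=()$, $(s_1,\ldots,s_n)\vdash^{\mathfrak{S}} t = (s_1,\ldots,s_n,t)$ (appending $t$ as a new last element), and $(s_1,\ldots,s_n)\circ^{\mathfrak{S}}(t_1,\ldots,t_m)=(s_1,\ldots,s_n,t_1,\ldots,t_m)$ (concatenation). For a sequence $s$, the sequeral $\overline{s}$ is the variable-free term defined by $\overline{()}=e$ and $\overline{(s_1,\ldots,s_n)} = (\ldots((e\vdash \overline{s_1})\vdash\overline{s_2})\ldots)\vdash\overline{s_n}$. *)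

(* Defs.v *)
From Stdlib Require Import List.
Import ListNotations.

Inductive sq : Type := node : list sq -> sq.

(** L-terms: variables, constant e, binary |- (tsnoc), binary o (tcat). *)
Inductive term : Type :=
| var : nat -> term
| te : term
| tsnoc : term -> term -> term
| tcat : term -> term -> term.

Inductive closed : term -> Prop :=
| closed_e : closed te
| closed_snoc : forall a b, closed a -> closed b -> closed (tsnoc a b)
| closed_cat : forall a b, closed a -> closed b -> closed (tcat a b).

Fixpoint interp (rho : nat -> sq) (t : term) : sq :=
  match t with
  | var n => rho n
  | te => node nil
  | tsnoc a b => match interp rho a with node l => node (l ++ [interp rho b]) end
  | tcat a b => match interp rho a, interp rho b with
                | node l1, node l2 => node (l1 ++ l2) end
  end.

(** Sequerals: bar () = e, bar (s_1..s_n) = (..((e |- bar s_1) |- bar s_2)..) |- bar s_n *)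
Fixpoint sequeral (s : sq) : term :=
  match s with
  | node l =>
      (fix go (acc : term) (l : list sq) : term :=
         match l with
         | nil => acc
         | x :: l' => go (tsnoc acc (sequeral x)) l'
         end) te l
  end.

Inductive form : Type :=
| fbot : form
| feq : term -> term -> form
| fimp : form -> form -> form
| fand : form -> form -> form
| f_or : form -> form -> form
| fall : form -> form
| fex : form -> form.

Fixpoint tsubst (sigma : nat -> term) (t : term) : term :=
  match t with
  | var n => sigma n
  | te => te
  | tsnoc a b => tsnoc (tsubst sigma a) (tsubst sigma b)
  | tcat a b => tcat (tsubst sigma a) (tsubst sigma b)
  end.

Definition up (sigma : nat -> term) : nat -> term :=
  fun n => match n with
           | 0 => var 0
           | S k => tsubst (fun m => var (S m)) (sigma k)
           end.

Fixpoint fsubst (sigma : nat -> term) (f : form) : form :=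
  match f with
  | fbot => fbot
  | feq a b => feq (tsubst sigma a) (tsubst sigma b)
  | fimp p q => fimp (fsubst sigma p) (fsubst sigma q)
  | fand p q => fand (fsubst sigma p) (fsubst sigma q)
  | f_or p q => f_or (fsubst sigma p) (fsubst sigma q)
  | fall p => fall (fsubst (up sigma) p)
  | fex p => fex (fsubst (up sigma) p)
  end.

Definition flift (f : form) : form := fsubst (fun n => var (S n)) f.
Definition subst0 (t : term) (f : form) : form :=
  fsubst (fun n => match n with 0 => t | S k => var k end) f.
Definition fneg (f : form) : form := fimp f fbot.

Inductive Prov (T : form -> Prop) : list form -> form -> Prop :=
| P_ax : forall G f, In f G -> Prov T G f
| P_thy : forall G f, T f -> Prov T G f
| P_raa : forall G f, Prov T (fneg f :: G) fbot -> Prov T G f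
| P_impI : forall G f g, Prov T (f :: G) g -> Prov T G (fimp f g)
| P_impE : forall G f g, Prov T G (fimp f g) -> Prov T G f -> Prov T G g
| P_andI : forall G f g, Prov T G f -> Prov T G g -> Prov T G (fand f g)
| P_andE1 : forall G f g, Prov T G (fand f g) -> Prov T G f
| P_andE2 : forall G f g, Prov T G (fand f g) -> Prov T G g
| P_orI1 : forall G f g, Prov T G f -> Prov T G (f_or f g)
| P_orI2 : forall G f g, Prov T G g -> Prov T G (f_or f g)
| P_orE : forall G f g h, Prov T G (f_or f g) -> Prov T (f :: G) h ->
            Prov T (g :: G) h -> Prov T G h
| P_allI : forall G f, Prov T (map flift G) f -> Prov T G (fall f)
| P_allE : forall G f t, Prov T G (fall f) -> Prov T G (subst0 t f)
| P_exI : forall G f t, Prov T G (subst0 t f) -> Prov T G (fex f)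
| P_exE : forall G f h, Prov T G (fex f) -> Prov T (f :: map flift G) (flift h) ->
            Prov T G h
| P_eqR : forall G t, Prov T G (feq t t)
| P_eqE : forall G s t f, Prov T G (feq s t) -> Prov T G (subst0 s f) ->
            Prov T G (subst0 t f).

Definition WSeq2 (f : form) : Prop :=
  exists l1 l2 : list sq,
    f = feq (tcat (sequeral (node l1)) (sequeral (node l2)))
            (sequeral (node (l1 ++ l2))).

(* Main.v *)
Require Import Defs.
From Stdlib Require Import List.
Import ListNotations.

Fixpoint sq_ind' (P : sq -> Prop) (H : forall l, Forall P l -> P (node l)) s : P s :=
  match s with node l => H l ((fix f l : Forall P l :=
     match l with nil => Forall_nil _ | x :: l' => Forall_cons _ (sq_ind' P H x) (f l') end) l) end.

Fixpoint goF (acc : term) (l : list sq) : term :=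
  match l with nil => acc | x :: l' => goF (tsnoc acc (sequeral x)) l' end.

Lemma seq_goF : forall l acc,
  (fix go (acc : term) (l : list sq) : term :=
         match l with
         | nil => acc
         | x :: l' => go (tsnoc acc (sequeral x)) l'
         end) acc l = goF acc l.
Proof. induction l; intros; simpl; auto. Qed.

Lemma sequeral_node l : sequeral (node l) = goF te l.
Proof. simpl. apply seq_goF. Qed.

Lemma goF_app l x acc : goF acc (l ++ [x]) = tsnoc (goF acc l) (sequeral x).
Proof. revert acc; induction l; intros; simpl; auto. Qed.

Lemma sequeral_closed : forall s, closed (sequeral s).
Proof.
  apply sq_ind'. intros l H. rewrite sequeral_node.
  assert (Hc : closed te) by constructor. revert Hc. generalize te.
  induction H; intros acc Hc; simpl; auto.
  apply IHForall. constructor; auto.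
Qed.

Lemma tsubst_closed sigma t : closed t -> tsubst sigma t = t.
Proof. induction 1; simpl; congruence. Qed.

Definition T := WSeq2.

Lemma sym x y : closed x -> Prov T nil (feq x y) -> Prov T nil (feq y x).
Proof.
  intros Hx H.
  pose proof (P_eqE T nil x y (feq (var 0) x) H) as K.
  unfold subst0 in K; simpl in K. rewrite !tsubst_closed in K by auto.
  apply K. apply P_eqR.
Qed.

Lemma trans x y z : closed x -> Prov T nil (feq x y) -> Prov T nil (feq y z) -> Prov T nil (feq x z).
Proof.
  intros Hx H1 H2.
  pose proof (P_eqE T nil y z (feq x (var 0)) H2) as K.
  unfold subst0 in K; simpl in K. rewrite !tsubst_closed in K by auto.
  apply K. auto.
Qed.

Lemma cong (op : term -> term -> term)
  (Hop : forall sigma a b, tsubst sigma (op a b) = op (tsubst sigma a) (tsubst sigma b))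
  (Hcl : forall a b, closed a -> closed b -> closed (op a b))
  a b A B : closed a -> closed b -> closed A ->
  Prov T nil (feq a A) -> Prov T nil (feq b B) -> Prov T nil (feq (op a b) (op A B)).
Proof.
  intros Ha Hb HA H1 H2.
  apply trans with (op A b); auto.
  - pose proof (P_eqE T nil a A (feq (op a b) (op (var 0) b)) H1) as K.
    unfold subst0 in K; simpl in K. rewrite !Hop in K. simpl in K.
    rewrite !tsubst_closed in K by auto. apply K. apply P_eqR.
  - pose proof (P_eqE T nil b B (feq (op A b) (op A (var 0))) H2) as K.
    unfold subst0 in K; simpl in K. rewrite !Hop in K. simpl in K.
    rewrite !tsubst_closed in K by auto. apply K. apply P_eqR.
Qed.

Theorem lemma1 : forall (t : term), closed t ->
  Prov WSeq2 nil (feq t (sequeral (interp (fun _ => node nil) t))).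
Proof.
  induction 1; simpl.
  - apply P_eqR.
  - destruct (interp (fun _ => node nil) a) as [la] eqn:Ea.
    rewrite sequeral_node, goF_app, <- sequeral_node.
    apply (cong tsnoc); auto using sequeral_closed; intros; constructor; auto.
  - destruct (interp (fun _ => node nil) a) as [la] eqn:Ea.
    destruct (interp (fun _ => node nil) b) as [lb] eqn:Eb.
    apply trans with (tcat (sequeral (node la)) (sequeral (node lb))).
    + constructor; auto.
    + apply (cong tcat); auto using sequeral_closed; intros; constructor; auto.
    + apply P_thy. exists la, lb. reflexivity.
Qed.
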